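(* Let $T$ be a tree with maximum degree $3$ on $n \geq 7$ vertices. Then $GRM_{-2}(T) \geq -\left\lfloor \frac{n-1}{3} \right\rfloor - 2$.
   Context: For a graph $G=(V,E)$ and a real $\lambda$, the general reduced second Zagreb index is $GRM_\lambda(G) = \sum_{uv \in E} (\deg(u)+\lambda)(\deg(v)+\lambda)$, where $\deg(v)$ is the degree of $v$. *)

(* Defs.v *)
From mathcomp Require Import all_boot all_order all_algebra.
Set Implicit Arguments. Unset Strict Implicit. Unset Printing Implicit Defensive.
Import GRing.Theory Num.Theory.

Definition simple_graph (V : finType) (e : rel V) : Prop :=
  symmetric e /\ irreflexive e.

Definition deg (V : finType) (e : rel V) (v : V) : nat := #|[set w | e v w]|.

Definition edges (V : finType) (e : rel V) : {set {set V}} :=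
  [set [set u; v] | u in V, v in V & e u v].

Definition connected_graph (V : finType) (e : rel V) : Prop :=
  forall u v : V, connect e u v.

Definition is_tree (V : finType) (e : rel V) : Prop :=
  simple_graph e /\ connected_graph e /\ #|edges e| = #|V| - 1.

Definition max_degree_eq (V : finType) (e : rel V) (k : nat) : Prop :=
  (forall v, deg e v <= k) /\ exists v, deg e v = k.

Local Open Scope ring_scope.

(* For an edge
   E = {u, v} (a 2-element set) the product over its elements is exactly
   (deg u + lambda)(deg v + lambda). *)
Definition GRM (R : comRingType) (V : finType) (e : rel V) (lambda : R) : R :=
  \sum_(E in edges e) \prod_(u in E) ((deg e u)%:R + lambda).

(* Main.v *)
Require Import Defs.
From mathcomp Require Import all_boot all_order all_algebra zify.
Import GRing.Theory Num.Theory.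
Set Implicit Arguments. Unset Strict Implicit.

Section S.
Variables (V : finType) (e : rel V).
Hypothesis (sym : symmetric e) (irr : irreflexive e).

Lemma dart_sum (h : V -> int) :
  ((\sum_(E in edges e) \prod_(u in E) h u) *+ 2 =
   \sum_v \sum_(w | e v w) h v * h w)%R.
Proof.
rewrite pair_big_dep /=.
rewrite (partition_big (fun p : V * V => [set p.1; p.2]) (mem (edges e))) /=; last first.
  move=> [a b] /= eab; apply/imset2P; exists a b => //; by rewrite inE.
rewrite -sumrMnl; apply: eq_bigr => E /imset2P [u v _]; rewrite inE => /andP[_ Huv] ->.
have uv : u != v by apply/eqP => Euv; move: Huv; rewrite Euv irr.
rewrite (eq_bigl (fun p => (p == (u,v)) || (p == (v,u)))); last first.
  move=> [a b] /=; apply/idP/idP.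
    case/andP => eab /eqP Hs.
    have ha : a \in [set u; v] by rewrite -Hs set21.
    have hb : b \in [set u; v] by rewrite -Hs set22.
    have ab : a != b by apply/eqP => Eab; move: eab; rewrite Eab irr.
    case/set2P: ha => Ea; case/set2P: hb => Eb; subst a b;
      first [ by rewrite eqxx in ab | by rewrite eqxx ?orbT ].
  case/orP => /eqP [-> ->] /=; first by rewrite Huv eqxx.
  by rewrite (sym v u) Huv setUC eqxx.
rewrite (bigD1 (u,v)) //=; last by rewrite eqxx.
rewrite (big_pred1 (v,u)); last first.
  move=> p; rewrite /pred1 /=; case: (p =P (u,v)) => [->|_] /=.
    by rewrite xpair_eqE (negbTE uv).
  by rewrite andbT.
rewrite big_setU1 ?inE //= big_set1 /= [(h v * h u)%R]mulrC.
by rewrite mulr2n.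
Qed.

Lemma sum_bool (P : pred V) : (\sum_w (P w : nat) = #|[set w | P w]|)%N.
Proof. rewrite -sum1dep_card [RHS]big_mkcond /=. apply: eq_bigr => w _. by case: (P w). Qed.

Definition bij (v w : V) (i j : nat) : bool := [&& e v w, deg e v == i & deg e w == j].
Definition cnt i j : nat := (\sum_v \sum_w bij v w i j)%N.
Definition nd i : nat := #|[set v | deg e v == i]|.

Lemma cnt_sym i j : cnt i j = cnt j i.
Proof.
rewrite /cnt exchange_big; apply: eq_bigr => v _; apply: eq_bigr => w _.
rewrite /bij (sym w v).
by case: (e v w); case: (deg e v == j); case: (deg e w == i).
Qed.

Hypothesis Hd : forall v, (1 <= deg e v <= 3)%N.

Lemma deg3 v : deg e v = 1%N \/ deg e v = 2%N \/ deg e v = 3%N.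
Proof. have := Hd v; lia. Qed.

Lemma cnt_row i : (cnt i 1 + cnt i 2 + cnt i 3 = i * nd i)%N.
Proof.
rewrite /cnt -!big_split /= /nd -sum_bool big_distrr /=.
apply: eq_bigr => v _; rewrite -!big_split /=.
transitivity (\sum_w ((deg e v == i) && e v w) : nat)%N.
  apply: eq_bigr => w _; rewrite /bij.
  by case: (deg3 w) => [->|[->|->]]; case: (e v w); case: (deg e v == i).
case: (deg e v =P i) => Hv /=; last by rewrite muln0 big1.
by rewrite sum_bool muln1 -Hv.
Qed.

Lemma card_split : (#|V| = nd 1 + nd 2 + nd 3)%N.
Proof.
rewrite /nd -!sum_bool -!big_split /= -sum1_card.
apply: eq_bigr => v _.
by case: (deg3 v) => [->|[->|->]].
Qed.

Lemma deg_split : (\sum_v deg e v = nd 1 + 2 * nd 2 + 3 * nd 3)%N.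
Proof.
rewrite /nd -!sum_bool !big_distrr -!big_split /=.
apply: eq_bigr => v _.
by case: (deg3 v) => [->|[->|->]].
Qed.


Lemma edges_deg : (2 * #|edges e| = \sum_v deg e v)%N.
Proof.
have H := dart_sum (fun _ => 1%R).
have L : ((\sum_(E in edges e) \prod_(u in E) (1 : int)) = #|edges e|%:R)%R.
  rewrite (eq_bigr (fun _ => 1%R)); last by move=> E _; rewrite big1.
  by rewrite sumr_const.
rewrite L in H.
have R : (\sum_v \sum_(w | e v w) (1 : int) * 1 = (\sum_v deg e v)%N%:R)%R.
  rewrite natr_sum; apply: eq_bigr => v _.
  rewrite (eq_bigr (fun _ => 1%R)) ?sumr_const; last by move=> w _; rewrite mulr1.
  by rewrite /deg cardsE.
rewrite R in H.
apply/eqP; rewrite -(eqr_nat int) natrM -H.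
by rewrite mulr_natl.
Qed.

Lemma grm_cnt :
  (GRM e (-2 : int) *+ 2 = (cnt 1 1 + cnt 3 3)%:R - (cnt 1 3 + cnt 3 1)%:R)%R.
Proof.
rewrite /GRM dart_sum /cnt !natrD !natr_sum -!big_split -sumrB /=.
apply: eq_bigr => v _.
rewrite !natr_sum -!big_split -sumrB /= big_mkcond /=.
apply: eq_bigr => w _.
rewrite /bij.
case: (e v w) => //=.
by case: (deg3 v) => [->|[->|->]]; case: (deg3 w) => [->|[->|->]].
Qed.


End S.

Section L.
Variables (V : finType) (e : rel V).
Hypothesis (sym : symmetric e) (irr : irreflexive e) (conn : connected_graph e).

Lemma deg_ge1 v : (1 < #|V|)%N -> (1 <= deg e v)%N.
Proof.
move=> HV.
have : (0 < #|~: [set v]|)%N by have := cardsC [set v]; rewrite cards1; lia.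
case/card_gt0P => w; rewrite !inE => wv.
case/connectP: (conn v w) => [[|x p]] /=; first by move=> _ Ew; rewrite Ew eqxx in wv.
case/andP => evx _ _; apply/card_gt0P; exists x; by rewrite inE.
Qed.

Lemma no_leaf_edge u v : (2 < #|V|)%N -> e u v -> deg e u = 1%N -> deg e v = 1%N -> False.
Proof.
move=> HV euv du dv.
have nb : forall x y, deg e x = 1%N -> e x y -> forall z, e x z -> z = y.
  move=> x y dx exy z exz.
  have : #|[set w | e x w]| == 1%N by rewrite -/(deg e x) dx.
  case/cards1P => t Ht.
  have : y \in [set w | e x w] by rewrite inE.
  have : z \in [set w | e x w] by rewrite inE.
  by rewrite Ht !inE => /eqP -> /eqP ->.
have cl : closed e [pred x | x \in [set u; v]].
  move=> x y exy /=; apply/idP/idP.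
    have evu : e v u by rewrite sym.
    case/set2P => Ex; subst x.
      by rewrite (nb u v du euv y exy) set22.
    by rewrite (nb v u dv evu y exy) set21.
  have evu : e v u by rewrite sym.
  have eyx : e y x by rewrite sym.
  case/set2P => Ey; subst y.
    by rewrite (nb u v du euv x eyx) set22.
  by rewrite (nb v u dv evu x eyx) set21.
have : (0 < #|~: [set u; v]|)%N.
  have := cardsC [set u; v]; rewrite cards2 => H; have := leq_b1 (u != v); lia.
case/card_gt0P => w; rewrite !inE => /norP [wu wv].
have := closed_connect cl (conn u w); rewrite /= set21 !inE.
by rewrite (negbTE wu) (negbTE wv).
Qed.
End L.

Theorem theorem3p2 (V : finType) (e : rel V) :
  is_tree e -> max_degree_eq e 3 -> (7 <= #|V|)%N ->
  (GRM e (-2 : int) >= - ((#|V| - 1) %/ 3)%:Z - 2)%R.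
Proof.
move=> [[sym irr] [conn hE]] [Hmax _] HV.
have Hd : forall v, (1 <= deg e v <= 3)%N.
  by move=> v; rewrite Hmax andbT deg_ge1 //; lia.
have c11 : cnt e 1 1 = 0%N.
  apply: big1 => v _; apply: big1 => w _.
  case: (boolP (bij e v w 1 1)) => // /and3P [evw /eqP d1 /eqP d2].
  by exfalso; apply: (no_leaf_edge sym conn _ evw d1 d2); lia.
have G := grm_cnt sym irr Hd.
have r1 := cnt_row Hd 1; have r2 := cnt_row Hd 2; have r3 := cnt_row Hd 3.
have s12 := cnt_sym sym 1 2; have s13 := cnt_sym sym 1 3; have s23 := cnt_sym sym 2 3.
have hn := card_split Hd; have hs := deg_split Hd; have he := edges_deg sym irr.
lia.
Qed.
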